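(* Let $k$ be a commutative ring, $H$ a cocommutative Hopf algebra over $k$, $A$ a cleft right $H$-comodule algebra with commutative $B=A^{\mathrm{co}H}$, and regard $B$ as a left $H$-module algebra via $h\cdot b=t(h_{(1)})bu(h_{(2)})$. Then the following data define a subcategory $\mathcal{X}_A$ of $\mathcal{C}_A$ with the two objects $\mathbf{1},\mathbf{2}$: $\mathcal{X}_A(\mathbf{1},\mathbf{1})=Z^1(H,B)$; $\mathcal{X}_A(\mathbf{2},\mathbf{1})=\Omega_A$; $\mathcal{X}_A(\mathbf{2},\mathbf{2})=\{\omega\in\mathrm{Hom}(H,B):\omega\circ S\in Z^1(H,B)\}$; $\mathcal{X}_A(\mathbf{1},\mathbf{2})=\{t\circ S:t\in\Omega_A\}$.
   Context: $\Delta(h)=h_{(1)}\otimes h_{(2)}$, antipode $S$, $\rho(a)=a_{[0]}\otimes a_{[1]}$, $B=\{a:\rho(a)=a\otimes1\}$. $A$ is cleft: there is a convolution invertible $H$-colinear $t:H\to A$ (colinear: $\rho(t(h))=t(h_{(1)})\otimes h_{(2)}$), with convolution inverse $u$; convolution: $(f*g)(h)=f(h_{(1)})g(h_{(2)})$. The module algebra structure above is independent of $t$. $Z^1(H,B)$ is the set of convolution invertible $k$-linear $v:H\to B$ with $v(hk)=(h_{(1)}\cdot v(k))v(h_{(2)})$ for all $h,k$. $\Omega_A$ is the set of $H$-colinear algebra maps $H\to A$. $\mathcal{C}_A$: two objects $\mathbf{1},\mathbf{2}$; $\mathcal{C}_A(\mathbf{i},\mathbf{j})$ denotes morphisms $\mathbf{i}\to\mathbf{j}$,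 sets of $k$-linear maps $H\to A$: $\mathcal{C}_A(\mathbf{1},\mathbf{1})=\{v:\rho(v(h))=v(h)\otimes1\}=\mathrm{Hom}(H,B)$; $\mathcal{C}_A(\mathbf{2},\mathbf{1})=\{t:\rho(t(h))=t(h_{(1)})\otimes h_{(2)}\}$; $\mathcal{C}_A(\mathbf{1},\mathbf{2})=\{u:\rho(u(h))=u(h_{(2)})\otimes S(h_{(1)})\}$; $\mathcal{C}_A(\mathbf{2},\mathbf{2})=\{w:\rho(w(h))=w(h_{(2)})\otimes S(h_{(1)})h_{(3)}\}$ (which equals $\mathrm{Hom}(H,B)$ here since $H$ is cocommutative). Composite of $f:\mathbf{i}\to\mathbf{j}$ and $g:\mathbf{j}\to\mathbf{k}$ is $g*f$. *)

(* Defs.v *)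
From HB Require Import structures.
From mathcomp Require Import all_boot all_algebra.
Set Implicit Arguments. Unset Strict Implicit. Unset Printing Implicit Defensive.
Import GRing.Theory.
Local Open Scope ring_scope.

Section Multilinear.
Variable k : comPzRingType.

Definition klinear (M P : lmodType k) (f : M -> P) : Prop :=
  forall (a : k) (x y : M), f (a *: x + y) = a *: f x + f y.

Definition kbilinear (M N P : lmodType k) (f : M -> N -> P) : Prop :=
  (forall m, klinear (f m)) /\ (forall n, klinear (fun m => f m n)).

Definition ktrilinear (M N L P : lmodType k) (f : M -> N -> L -> P) : Prop :=
  (forall m n, klinear (f m n)) /\ (forall m l, klinear (fun n => f m n l))
  /\ (forall n l, klinear (fun m => f m n l)).
End Multilinear.

(* A tensor product M (x)_k N, specified by its universal property:
   a k-module with a bilinear map tp_mul, through which every bilinear map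
   factors (tp_lift) uniquely as a linear map. *)
Record tensor_product (k : comPzRingType) (M N : lmodType k) := TensorProduct {
  tp_carrier :> lmodType k;
  tp_mul : M -> N -> tp_carrier;
  tp_lift : forall P : lmodType k, (M -> N -> P) -> tp_carrier -> P;
  tp_mul_bilinear : kbilinear tp_mul;
  tp_lift_linear : forall (P : lmodType k) (f : M -> N -> P),
      kbilinear f -> klinear (tp_lift f);
  tp_lift_mul : forall (P : lmodType k) (f : M -> N -> P),
      kbilinear f -> forall m n, tp_lift f (tp_mul m n) = f m n;
  tp_ext : forall (P : lmodType k) (g1 g2 : tp_carrier -> P),
      klinear g1 -> klinear g2 ->
      (forall m n, g1 (tp_mul m n) = g2 (tp_mul m n)) -> forall x, g1 x = g2 x
}.
Arguments tp_mul {k M N} t _ _.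
Arguments tp_lift {k M N} t {P} _ _.

Section Hopf.
Variables (k : comPzRingType) (H A : algType k).
Variables (HH : tensor_product H H) (AH : tensor_product A H).
Variables (Delta : H -> HH) (eps : H -> k) (S : H -> H) (rho : A -> AH).

(* Sweedler notation: sw f h = f(h_(1), h_(2)) for bilinear f *)
Definition sw (P : lmodType k) (f : H -> H -> P) (h : H) : P :=
  tp_lift HH f (Delta h).
(* swA f a = f(a_[0], a_[1]) *)
Definition swA (P : lmodType k) (f : A -> H -> P) (a : A) : P :=
  tp_lift AH f (rho a).

(* cocommutative Hopf algebra (H, Delta, eps, S) over k.
   Coassociativity is stated by evaluating both sides against an arbitrary
   trilinear map, i.e. via the universal property of H (x) H (x) H. *)
Definition is_cocomm_hopf : Prop :=
  klinear Delta /\ klinear (eps : H -> k^o) /\ klinear S /\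
   (forall (P : lmodType k) (f : H -> H -> H -> P), ktrilinear f ->
     forall h, sw (fun x z => sw (fun a b => f a b z) x) h
             = sw (fun x y => sw (fun a b => f x a b) y) h) /\
   (forall h, sw (fun x y => eps x *: y) h = h /\ sw (fun x y => eps y *: x) h = h) /\
   (forall h g, Delta (h * g) =
      sw (fun x y => sw (fun a b => tp_mul HH (x * a) (y * b)) g) h) /\
   Delta 1 = tp_mul HH 1 1 /\
   (forall h g, eps (h * g) = eps h * eps g) /\ eps 1 = 1 /\
   (forall h, sw (fun x y => S x * y) h = eps h *: 1
            /\ sw (fun x y => x * S y) h = eps h *: 1) /\
   (forall h, Delta h = sw (fun x y => tp_mul HH y x) h).

Definition is_comodule_algebra : Prop :=
  [/\ klinear rho,
   (forall (P : lmodType k) (f : A -> H -> H -> P), ktrilinear f ->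
     forall a, swA (fun a' z => swA (fun b x => f b x z) a') a
             = swA (fun b x => sw (fun y z => f b y z) x) a),
   (forall a, swA (fun b x => eps x *: b) a = a),
   (forall a c, rho (a * c) =
      swA (fun a1 x => swA (fun c1 y => tp_mul AH (a1 * c1) (x * y)) c) a) &
   rho 1 = tp_mul AH 1 1].

Definition coinv (a : A) : Prop := rho a = tp_mul AH a 1.

Definition conv (f g : H -> A) (h : H) : A := sw (fun x y => f x * g y) h.
Definition cunit (h : H) : A := eps h *: 1.

Definition colinear (f : H -> A) : Prop :=
  forall h, rho (f h) = sw (fun x y => tp_mul AH (f x) y) h.

Definition homB (f : H -> A) : Prop := klinear f /\ forall h, coinv (f h).

Inductive obj := O1 | O2.

Definition Cmor (i j : obj) (f : H -> A) : Prop :=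
  klinear f /\
  match i, j with
  | O1, O1 => forall h, rho (f h) = tp_mul AH (f h) 1
  | O2, O1 => colinear f
  | O1, O2 => forall h, rho (f h) = sw (fun x y => tp_mul AH (f y) (S x)) h
  | O2, O2 => forall h, rho (f h) =
       sw (fun x y => sw (fun a b => tp_mul AH (f b) (S a * y)) x) h
  end.

(* identity morphism (the convolution unit) and composition g o f := g * f *)
Definition Cid (i : obj) : H -> A := cunit.
Definition Ccomp (f g : H -> A) : H -> A := conv g f.

Definition act (t u : H -> A) (h : H) (b : A) : A :=
  sw (fun x y => t x * b * u y) h.

Definition Z1 (t u : H -> A) (v : H -> A) : Prop :=
  homB v /\
  (exists w, homB w /\ (forall h, conv v w h = cunit h)
                    /\ (forall h, conv w v h = cunit h)) /\
  (forall h g, v (h * g) = sw (fun x y => act t u x (v g) * v y) h).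

Definition OmegaA (f : H -> A) : Prop :=
  [/\ klinear f, colinear f, (forall h g, f (h * g) = f h * f g) & f 1 = 1].

Definition Xmor (t u : H -> A) (i j : obj) (f : H -> A) : Prop :=
  match i, j with
  | O1, O1 => Z1 t u f
  | O2, O1 => OmegaA f
  | O2, O2 => homB f /\ Z1 t u (fun h => f (S h))
  | O1, O2 => exists t', OmegaA t' /\ forall h, f h = t' (S h)
  end.

Definition is_subcategory (X : obj -> obj -> (H -> A) -> Prop) : Prop :=
  [/\ (forall i j f, X i j f -> Cmor i j f),
      (forall i, X i i (Cid i)) &
      (forall i j l f g, X i j f -> X j l g -> X i l (Ccomp f g))].
End Hopf.

(* Main.v *)
Require Import Defs.
From HB Require Import structures.
From mathcomp Require Import all_boot all_algebra.
From Stdlib Require Import FunctionalExtensionality.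
Set Implicit Arguments. Unset Strict Implicit. Unset Printing Implicit Defensive.
Import GRing.Theory.
Local Open Scope ring_scope.
Section Lin.
Variable k : comPzRingType.
Implicit Types M N P Q : lmodType k.

Lemma klin_id M : klinear (fun x : M => x).
Proof. by []. Qed.
Lemma klin_comp M N P (L : N -> P) (F : M -> N) :
  klinear L -> klinear F -> klinear (fun x => L (F x)).
Proof. by move=> hL hF a x y; rewrite hF hL. Qed.
Lemma klin_mulr (R : algType k) M (F : M -> R) c :
  klinear F -> klinear (fun x => F x * c).
Proof. by move=> hF a x y; rewrite hF mulrDl scalerAl. Qed.
Lemma klin_mull (R : algType k) M (F : M -> R) c :
  klinear F -> klinear (fun x => c * F x).
Proof. by move=> hF a x y; rewrite hF mulrDr scalerAr. Qed.
Lemma klin_scale M P (F : M -> P) (c : k) :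
  klinear F -> klinear (fun x => c *: F x).
Proof. by move=> hF a x y; rewrite hF scalerDr !scalerA mulrC. Qed.
Lemma klin_scalel M P (e : M -> k^o) (p : P) :
  klinear e -> klinear (fun x => e x *: p).
Proof. by move=> he a x y; rewrite he scalerDl /= -scalerA. Qed.
Lemma klin_add M P (F G : M -> P) :
  klinear F -> klinear G -> klinear (fun x => F x + G x).
Proof.
move=> hF hG a x y; rewrite hF hG scalerDr -!addrA; congr (_ + _).
by rewrite addrCA.
Qed.
Lemma klin_tpl M N (T : tensor_product M N) Q (F : Q -> M) n :
  klinear F -> klinear (fun x => tp_mul T (F x) n).
Proof. move=> hF; apply: (klin_comp (L := fun m => tp_mul T m n)) => //. by case: (tp_mul_bilinear T) => _ h; exact: h. Qed.
Lemma klin_tpr M N (T : tensor_product M N) Q (F : Q -> N) m :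
  klinear F -> klinear (fun x => tp_mul T m (F x)).
Proof. move=> hF; apply: (klin_comp (L := tp_mul T m)) => //. by case: (tp_mul_bilinear T) => h _; exact: h. Qed.
Lemma klin_lift_arg M N (T : tensor_product M N) P Q (f : M -> N -> P) (F : Q -> T) :
  kbilinear f -> klinear F -> klinear (fun x => tp_lift T f (F x)).
Proof. move=> hf hF; apply: klin_comp hF; exact: tp_lift_linear. Qed.

Lemma lift_add M N (T : tensor_product M N) P (f g : M -> N -> P) c z :
  kbilinear f -> kbilinear g ->
  tp_lift T (fun a b => c *: f a b + g a b) z = c *: tp_lift T f z + tp_lift T g z.
Proof.
move=> hf hg.
have hfg : kbilinear (fun a b => c *: f a b + g a b).
  case: hf => hf1 hf2; case: hg => hg1 hg2; split=> m.
    apply: klin_add => //; exact: klin_scale.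
  apply: (klin_add (F := fun a => c *: f a m)) => //; exact: (klin_scale (F := fun a => f a m)).
apply: (tp_ext (g1 := tp_lift T _) (g2 := fun z => c *: tp_lift T f z + tp_lift T g z)).
- exact: tp_lift_linear.
- apply: klin_add; [apply: klin_scale|]; exact: tp_lift_linear.
- by move=> m n; rewrite !tp_lift_mul.
Qed.

Lemma klin_lift_param M N (T : tensor_product M N) P Q (G : Q -> M -> N -> P) z :
  (forall x, kbilinear (G x)) -> (forall a b, klinear (fun x => G x a b)) ->
  klinear (fun x => tp_lift T (G x) z).
Proof.
move=> hG hG2 c x y.
have -> : G (c *: x + y) = fun a b => c *: G x a b + G y a b.
  by apply: functional_extensionality => a; apply: functional_extensionality => b; rewrite hG2.
by rewrite lift_add.
Qed.

Lemma lift_nat M N (T : tensor_product M N) P P' (L : P -> P') (f : M -> N -> P) z :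
  klinear L -> kbilinear f -> L (tp_lift T f z) = tp_lift T (fun a b => L (f a b)) z.
Proof.
move=> hL hf.
have hLf : kbilinear (fun a b => L (f a b)).
  by case: hf => h1 h2; split=> m; [apply: klin_comp (h1 m)|apply: klin_comp (h2 m)].
apply: (tp_ext (g1 := fun z => L (tp_lift T f z))).
- apply: klin_comp => //; exact: tp_lift_linear.
- exact: tp_lift_linear.
- by move=> m n; rewrite !tp_lift_mul.
Qed.

Lemma lift_tp M N (T : tensor_product M N) z : tp_lift T (tp_mul T) z = z.
Proof.
apply: (tp_ext (g2 := id)).
- apply: tp_lift_linear; exact: tp_mul_bilinear.
- by [].
by move=> m n; rewrite tp_lift_mul //; exact: tp_mul_bilinear.
Qed.
Lemma klin_bil1 M N P Q (f : M -> N -> P) (F : Q -> M) n :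
  kbilinear f -> klinear F -> klinear (fun x => f (F x) n).
Proof. by case=> _ h2 hF; apply: (klin_comp (L := fun m => f m n)). Qed.
Lemma klin_bil2 M N P Q (f : M -> N -> P) (F : Q -> N) m :
  kbilinear f -> klinear F -> klinear (fun x => f m (F x)).
Proof. by case=> h1 _ hF; apply: (klin_comp (L := f m)). Qed.
End Lin.

Ltac klin_hook := fail.
Ltac klin :=
  rewrite ?/sw ?/swA;
  repeat first
  [ assumption
  | klin_hook
  | match goal with hq : forall _, _ |- klinear _ => exact: hq end
  | apply: klin_id
  | apply: klin_add
  | apply: klin_lift_param; [intro; split=> ?|intros ? ?]
  | apply: klin_lift_arg; [split=> ?|]
  | apply: klin_tpl
  | apply: klin_tpr
  | apply: klin_mulr
  | apply: klin_mull
  | apply: klin_scale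
  | apply: klin_scalel
  | match goal with hf : kbilinear ?f |- klinear (?f _) => exact: (proj1 hf _) end
  | match goal with hf : kbilinear ?f |- klinear (fun x => ?f x _) => exact: (proj2 hf _) end
  | match goal with hf : kbilinear ?f |- _ => apply: (klin_bil1 _ hf) end
  | match goal with hf : kbilinear ?f |- _ => apply: (klin_bil2 _ hf) end
  | match goal with hL : klinear ?L |- _ => apply: (klin_comp hL) end ].

Section TensorAlg.
Variables (k : comPzRingType) (R1 R2 : algType k) (T : tensor_product R1 R2).

Lemma mul_bil (R : algType k) : kbilinear (fun a b : R => a * b).
Proof. split=> ?; klin. Qed.

Definition mulT (X Y : T) : T :=
  tp_lift T (fun a b => tp_lift T (fun c d => tp_mul T (a * c) (b * d)) Y) X.

Lemma tpbil : kbilinear (tp_mul T).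
Proof. exact: tp_mul_bilinear. Qed.

Lemma mulT_bil : kbilinear mulT.
Proof. have hm := tpbil; rewrite /mulT; split=> ?; klin. Qed.

Lemma mulT_purel a b Y : mulT (tp_mul T a b) Y = tp_lift T (fun c d => tp_mul T (a * c) (b * d)) Y.
Proof. have hm := tpbil; rewrite /mulT tp_lift_mul //; split=> ?; klin. Qed.

Lemma mulT_pure a b c d : mulT (tp_mul T a b) (tp_mul T c d) = tp_mul T (a * c) (b * d).
Proof. have hm := tpbil; rewrite mulT_purel tp_lift_mul //; split=> ?; klin. Qed.

Lemma mulT_assoc X Y Z : mulT (mulT X Y) Z = mulT X (mulT Y Z).
Proof.
have hm := mulT_bil.
pattern X; apply: (tp_ext (g1 := fun X => mulT (mulT X Y) Z) (g2 := fun X => mulT X (mulT Y Z))); [klin|klin|] => a b.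
pattern Y; apply: (tp_ext (g1 := fun Y => mulT (mulT (tp_mul T a b) Y) Z) (g2 := fun Y => mulT (tp_mul T a b) (mulT Y Z))); [klin|klin|] => c d.
pattern Z; apply: (tp_ext (g1 := fun Z => mulT (mulT (tp_mul T a b) (tp_mul T c d)) Z) (g2 := fun Z => mulT (tp_mul T a b) (mulT (tp_mul T c d) Z))); [klin|klin|] => e f.
by rewrite !mulT_pure !mulrA.
Qed.

Lemma mulT1l Y : mulT (tp_mul T 1 1) Y = Y.
Proof.
have hm := mulT_bil.
pattern Y; apply: (tp_ext (g1 := fun Y => mulT (tp_mul T 1 1) Y) (g2 := id)); [klin|by []|] => c d.
by rewrite mulT_pure !mul1r.
Qed.
Lemma mulT1r Y : mulT Y (tp_mul T 1 1) = Y.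
Proof.
have hm := mulT_bil.
pattern Y; apply: (tp_ext (g1 := fun Y => mulT Y (tp_mul T 1 1)) (g2 := id)); [klin|by []|] => c d.
by rewrite mulT_pure !mulr1.
Qed.
End TensorAlg.

Ltac kl := lazymatch goal with
  | |- kbilinear _ => split=> ?; klin
  | |- ktrilinear _ => split; [|split] => ? ?; klin
  | _ => klin end.
Section LinBasic.
Variable k : comPzRingType.
Lemma klin0 (M P : lmodType k) (f : M -> P) : klinear f -> f 0 = 0.
Proof. move=> hf; have := hf 1 0 0; rewrite !scale1r addr0 => h. by have := congr1 (fun z => z - f 0) h; rewrite addrK subrr => <-. Qed.
Lemma klinZ (M P : lmodType k) (f : M -> P) a x : klinear f -> f (a *: x) = a *: f x.
Proof. by move=> hf; have := hf a x 0; rewrite addr0 (klin0 hf) addr0. Qed.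
Lemma klinD (M P : lmodType k) (f : M -> P) x y : klinear f -> f (x + y) = f x + f y.
Proof. by move=> hf; have := hf 1 x y; rewrite !scale1r. Qed.
End LinBasic.

Section Hopf.
Variables (k : comPzRingType) (H A : algType k).
Variables (HH : tensor_product H H) (AH : tensor_product A H).
Variables (Delta : H -> HH) (eps : H -> k) (S : H -> H) (rho : A -> AH).
Hypothesis hD : klinear Delta.
Hypothesis he : klinear (eps : H -> k^o).
Hypothesis hS : klinear S.
Hypothesis coass : forall (P : lmodType k) (f : H -> H -> H -> P), ktrilinear f ->
     forall h, sw Delta (fun x z => sw Delta (fun a b => f a b z) x) h
             = sw Delta (fun x y => sw Delta (fun a b => f x a b) y) h.
Hypothesis counit : forall h, sw Delta (fun x y => eps x *: y) h = h /\ sw Delta (fun x y => eps y *: x) h = h.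
Hypothesis Dmul : forall h g, Delta (h * g) =
      sw Delta (fun x y => sw Delta (fun a b => tp_mul HH (x * a) (y * b)) g) h.
Hypothesis D1 : Delta 1 = tp_mul HH 1 1.
Hypothesis emul : forall h g, eps (h * g) = eps h * eps g.
Hypothesis e1 : eps 1 = 1.
Hypothesis antip : forall h, sw Delta (fun x y => S x * y) h = eps h *: 1
            /\ sw Delta (fun x y => x * S y) h = eps h *: 1.
Hypothesis cocom : forall h, Delta h = sw Delta (fun x y => tp_mul HH y x) h.

Local Notation SW := (sw Delta).

Ltac bil := split=> ?; klin.
Ltac tril := split; [|split] => ? ?; klin.

Lemma swnat (P Q : lmodType k) (L : P -> Q) (f : H -> H -> P) h :
  klinear L -> kbilinear f -> L (SW f h) = SW (fun a b => L (f a b)) h.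
Proof. by move=> hL hf; rewrite /sw lift_nat. Qed.

Lemma sw_lin (P : lmodType k) (f : H -> H -> P) : kbilinear f -> klinear (SW f).
Proof. move=> hf; rewrite /sw; klin. Qed.

Lemma sw_tp h : SW (tp_mul HH) h = Delta h.
Proof. by rewrite /sw lift_tp. Qed.

Lemma swap (P : lmodType k) (f : H -> H -> P) h :
  kbilinear f -> SW f h = SW (fun x y => f y x) h.
Proof.
move=> hf; rewrite {1}/sw cocom -/(SW _ h) (swnat (L := tp_lift HH f)) //.
- by congr (SW _ h); do 2 apply: functional_extensionality => ?; rewrite tp_lift_mul.
- exact: tp_lift_linear.
- case: (tp_mul_bilinear HH) => h1 h2; split=> ?; [exact: h2|exact: h1].
Qed.

Lemma counitl (P : lmodType k) (F : H -> P) h :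
  klinear F -> SW (fun x y => eps x *: F y) h = F h.
Proof.
move=> hF; rewrite -{2}(proj1 (counit h)) (swnat (L := F)) //; last by bil.
by congr (SW _ h); do 2 apply: functional_extensionality => ?; rewrite klinZ.
Qed.
Lemma counitr (P : lmodType k) (F : H -> P) h :
  klinear F -> SW (fun x y => eps y *: F x) h = F h.
Proof.
move=> hF; rewrite -{2}(proj2 (counit h)) (swnat (L := F)) //; last by bil.
by congr (SW _ h); do 2 apply: functional_extensionality => ?; rewrite klinZ.
Qed.

Lemma swmul (P : lmodType k) (f : H -> H -> P) h g :
  kbilinear f -> SW f (h * g) = SW (fun x y => SW (fun a b => f (x * a) (y * b)) g) h.
Proof.
move=> hf; rewrite {1}/sw Dmul (swnat (L := tp_lift HH f)); last by bil.
  congr (SW _ h); do 2 apply: functional_extensionality => ?.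
  rewrite (swnat (L := tp_lift HH f)); last by bil.
  + by congr (SW _ g); do 2 apply: functional_extensionality => ?; rewrite tp_lift_mul.
  + exact: tp_lift_linear.
exact: tp_lift_linear.
Qed.

Lemma sw1 (P : lmodType k) (f : H -> H -> P) : kbilinear f -> SW f 1 = f 1 1.
Proof. by move=> hf; rewrite /sw D1 tp_lift_mul. Qed.


Lemma funext2 (X Y Z : Type) (f g : X -> Y -> Z) : (forall x y, f x y = g x y) -> f = g.
Proof. by move=> e; do 2 apply: functional_extensionality => ?; rewrite e. Qed.

Section Conv.
Variables (M : lmodType k) (mul : M -> M -> M) (one : M).
Hypothesis hmul : kbilinear mul.
Hypothesis massoc : forall a b c, mul (mul a b) c = mul a (mul b c).
Hypothesis m1l : forall a, mul one a = a.
Hypothesis m1r : forall a, mul a one = a.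

Definition cv (f g : H -> M) h := SW (fun x y => mul (f x) (g y)) h.
Definition cu h : M := eps h *: one.

Lemma cv_lin f g : klinear f -> klinear g -> klinear (cv f g).
Proof. move=> hf hg; apply: sw_lin; bil. Qed.
Lemma cu_lin : klinear cu.
Proof. rewrite /cu; klin. Qed.

Lemma cv_assoc f g l h : klinear f -> klinear g -> klinear l ->
  cv (cv f g) l h = cv f (cv g l) h.
Proof.
move=> hf hg hl; rewrite /cv.
have -> : (fun x y => mul (SW (fun x0 y0 => mul (f x0) (g y0)) x) (l y)) =
          (fun x y => SW (fun a b => mul (mul (f a) (g b)) (l y)) x).
  apply: funext2 => x y; rewrite (swnat (L := fun m => mul m (l y))) //; [klin|bil].
rewrite (coass (f := fun a b c => mul (mul (f a) (g b)) (l c))); last by tril.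
congr (SW _ h); apply: funext2 => x y.
rewrite (swnat (L := mul (f x))); [|klin|bil].
by congr (SW _ y); apply: funext2 => ??; rewrite massoc.
Qed.

Lemma mulZl c a b : mul (c *: a) b = c *: mul a b.
Proof. exact: (klinZ _ _ (proj2 hmul b)). Qed.
Lemma mulZr c a b : mul a (c *: b) = c *: mul a b.
Proof. exact: (klinZ _ _ (proj1 hmul a)). Qed.

Lemma cu_l f h : klinear f -> cv cu f h = f h.
Proof.
move=> hf; rewrite /cv /cu -(counitl (F := f)) //.
by congr (SW _ h); apply: funext2 => x y; rewrite mulZl m1l.
Qed.
Lemma cu_r f h : klinear f -> cv f cu h = f h.
Proof.
move=> hf; rewrite /cv /cu -(counitr (F := f)) //.
by congr (SW _ h); apply: funext2 => x y; rewrite mulZr m1r.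
Qed.

Lemma cv_extl f f' g h : (forall x, f x = f' x) -> cv f g h = cv f' g h.
Proof. by move=> e; rewrite /cv; congr (SW _ h); apply: funext2 => x y; rewrite e. Qed.
Lemma cv_extr f g g' h : (forall x, g x = g' x) -> cv f g h = cv f g' h.
Proof. by move=> e; rewrite /cv; congr (SW _ h); apply: funext2 => x y; rewrite e. Qed.

Lemma cv_inv_uniq f g g' : klinear f -> klinear g -> klinear g' ->
  (forall h, cv f g h = cu h) -> (forall h, cv g' f h = cu h) -> forall h, g h = g' h.
Proof.
move=> hf hg hg' e1' e2 h.
rewrite -cu_l // (cv_extl _ (f' := cv g' f)) => [|x]; last by rewrite e2.
rewrite cv_assoc // (cv_extr _ (g' := cu)) => [|x]; last by rewrite e1'.
by rewrite cu_r.
Qed.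

Lemma cv_comm f g h : klinear f -> klinear g ->
  (forall x y, mul (f x) (g y) = mul (g y) (f x)) -> cv f g h = cv g f h.
Proof.
move=> hf hg e; rewrite /cv swap; last by bil.
by congr (SW _ h); apply: funext2 => x y; rewrite e.
Qed.
End Conv.


Lemma sw_ext (P : lmodType k) (f g : H -> H -> P) h :
  (forall x y, f x y = g x y) -> SW f h = SW g h.
Proof. by move=> e; rewrite (funext2 e). Qed.

Definition ml4 (P : lmodType k) (F : H -> H -> H -> H -> P) :=
  [/\ (forall y a b, klinear (fun x => F x y a b)), (forall x a b, klinear (fun y => F x y a b)),
      (forall x y b, klinear (fun a => F x y a b)) & (forall x y a, klinear (fun b => F x y a b))].

Lemma fubini (P : lmodType k) (F : H -> H -> H -> H -> P) h g : ml4 F ->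
  SW (fun x y => SW (fun a b => F x y a b) g) h = SW (fun a b => SW (fun x y => F x y a b) h) g.
Proof.
case=> h1 h2 h3 h4; rewrite /sw; move: (Delta h) (Delta g) => X Y.
pattern X; apply: (tp_ext (g1 := fun X => tp_lift HH (fun x y => tp_lift HH (F x y) Y) X)
  (g2 := fun X => tp_lift HH (fun a b => tp_lift HH (fun x y => F x y a b) X) Y)); [klin|klin|] => x y.
rewrite tp_lift_mul; last by kl.
by congr (tp_lift HH _ Y); apply: funext2 => a b; rewrite tp_lift_mul //; kl.
Qed.

Lemma eps_S h : eps (S h) = eps h.
Proof.
rewrite -(counitr (F := fun x => (eps (S x) : k^o)) h); last by kl.
have -> : eps h = (eps (SW (fun x y => S x * y) h) : k^o).
  by rewrite (proj1 (antip h)) (klinZ _ _ he) e1 [_ *: _]mulr1.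
rewrite (swnat (L := (eps : H -> k^o))); [|kl|kl].
by apply: (sw_ext (P := k^o)) => x y; rewrite emul [_ *: _]mulrC.
Qed.

Lemma S1 : S 1 = 1.
Proof.
have := proj1 (antip 1); rewrite sw1; last by kl.
by rewrite mulr1 e1 scale1r.
Qed.

Lemma coassE (P : lmodType k) (f : H -> H -> H -> P) h : ktrilinear f ->
  SW (fun x z => SW (fun a b => f a b z) x) h = SW (fun x y => SW (fun a b => f x a b) y) h.
Proof. by move=> hf; apply: (coass hf). Qed.

Section Conv2.
Variables (M : lmodType k) (mul : M -> M -> M) (one : M).
Hypothesis hmul : kbilinear mul.
Hypothesis massoc : forall a b c, mul (mul a b) c = mul a (mul b c).
Hypothesis m1l : forall a, mul one a = a.
Hypothesis m1r : forall a, mul a one = a.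

Definition cv2 (F G : H -> H -> M) h g :=
  SW (fun x y => SW (fun a b => mul (F x a) (G y b)) g) h.
Definition cu2 h g : M := eps h *: (eps g *: one).

Lemma cv2_bil F G : kbilinear F -> kbilinear G -> kbilinear (cv2 F G).
Proof. move=> hF hG; rewrite /cv2; kl. Qed.
Lemma cu2_bil : kbilinear cu2.
Proof. rewrite /cu2; kl. Qed.

Lemma cv2_assoc F G K h g : kbilinear F -> kbilinear G -> kbilinear K ->
  cv2 (cv2 F G) K h g = cv2 F (cv2 G K) h g.
Proof.
move=> hF hG hK; rewrite /cv2.
transitivity (SW (fun x y => SW (fun a b => SW (fun p q => SW (fun r s =>
   mul (mul (F p r) (G q s)) (K y b)) a) x) g) h).
  apply: sw_ext => x y; apply: sw_ext => a b.
  rewrite (swnat (L := fun m => mul m (K y b))); [|kl|kl].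
  apply: sw_ext => p q; rewrite (swnat (L := fun m => mul m (K y b))); [done|kl|kl].
transitivity (SW (fun x y => SW (fun p q => SW (fun a b => SW (fun r s =>
   mul (mul (F p r) (G q s)) (K y b)) a) g) x) h).
  apply: sw_ext => x y.
  rewrite (fubini (F := fun a b p q => SW (fun r s => mul (mul (F p r) (G q s)) (K y b)) a)) //.
  split=> *; kl.
transitivity (SW (fun x y => SW (fun p q => SW (fun r z => SW (fun s b =>
   mul (mul (F p r) (G q s)) (K y b)) z) g) x) h).
  apply: sw_ext => x y; apply: sw_ext => p q.
  rewrite (coassE (f := fun r s b => mul (mul (F p r) (G q s)) (K y b))) //; kl.
rewrite (coassE (f := fun p q y => SW (fun r z => SW (fun s b =>
   mul (mul (F p r) (G q s)) (K y b)) z) g)); last by kl.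
apply: sw_ext => x y; symmetry.
transitivity (SW (fun a b => SW (fun q w => SW (fun s c =>
   mul (F x a) (mul (G q s) (K w c))) b) y) g).
  apply: sw_ext => a b.
  rewrite (swnat (L := mul (F x a))); [|kl|kl].
  apply: sw_ext => q w; rewrite (swnat (L := mul (F x a))); [done|kl|kl].
rewrite (fubini (F := fun a b q w => SW (fun s c => mul (F x a) (mul (G q s) (K w c))) b)); last by split=> *; kl.
apply: sw_ext => q w.
by apply: sw_ext => a b; apply: sw_ext => s c; rewrite massoc.
Qed.

Lemma mulZl2 c a b : mul (c *: a) b = c *: mul a b.
Proof. exact: (klinZ _ _ (proj2 hmul b)). Qed.
Lemma mulZr2 c a b : mul a (c *: b) = c *: mul a b.
Proof. exact: (klinZ _ _ (proj1 hmul a)). Qed.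

Lemma cu2_l F h g : kbilinear F -> cv2 cu2 F h g = F h g.
Proof.
move=> hF; rewrite /cv2 /cu2.
rewrite -(counitl (F := fun y => F y g) h); last by kl.
apply: sw_ext => x y.
rewrite -(counitl (F := F y) g); last by kl.
rewrite (swnat (L := fun m => eps x *: m)); [|kl|kl].
by apply: sw_ext => a b; rewrite !mulZl2 m1l.
Qed.
Lemma cu2_r F h g : kbilinear F -> cv2 F cu2 h g = F h g.
Proof.
move=> hF; rewrite /cv2 /cu2.
rewrite -(counitr (F := fun y => F y g) h); last by kl.
apply: sw_ext => x y.
rewrite -(counitr (F := F x) g); last by kl.
rewrite (swnat (L := fun m => eps y *: m)); [|kl|kl].
by apply: sw_ext => a b; rewrite !mulZr2 m1r.
Qed.

Lemma cv2_extl F F' G h g : (forall x y, F x y = F' x y) -> cv2 F G h g = cv2 F' G h g.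
Proof. by move=> e; rewrite (funext2 e). Qed.
Lemma cv2_extr F G G' h g : (forall x y, G x y = G' x y) -> cv2 F G h g = cv2 F G' h g.
Proof. by move=> e; rewrite (funext2 e). Qed.

Lemma cv2_inv_uniq F G G' : kbilinear F -> kbilinear G -> kbilinear G' ->
  (forall h g, cv2 F G h g = cu2 h g) -> (forall h g, cv2 G' F h g = cu2 h g) ->
  forall h g, G h g = G' h g.
Proof.
move=> hF hG hG' e1' e2 h g.
rewrite -cu2_l // (cv2_extl _ (F' := cv2 G' F)) => [|x y]; last by rewrite e2.
rewrite cv2_assoc // (cv2_extr _ (G' := cu2)) => [|x y]; last by rewrite e1'.
by rewrite cu2_r.
Qed.

Lemma cv2_comm F G h g : kbilinear F -> kbilinear G ->
  (forall x y a b, mul (F x a) (G y b) = mul (G y b) (F x a)) -> cv2 F G h g = cv2 G F h g.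
Proof.
move=> hF hG e; rewrite /cv2 swap; last by kl.
apply: sw_ext => x y; rewrite swap; last by kl.
by apply: sw_ext => a b; rewrite e.
Qed.
End Conv2.

Lemma S_anti h g : S (h * g) = S g * S h.
Proof.
have hm := mul_bil H.
symmetry.
apply: (@cv2_inv_uniq H (fun a b => a * b) 1 hm (fun a b c => esym (@mulrA H a b c)) (@mul1r H) (@mulr1 H) (fun a b => a * b) (fun a b => S b * S a) (fun a b => S (a * b))); [kl|kl|kl| |].
- move=> x y; rewrite /cv2 /cu2.
  transitivity (SW (fun a b => a * (eps y *: 1) * S b) x).
    apply: sw_ext => a b.
    rewrite -(proj2 (antip y)) (swnat (L := fun m => a * m * S b)); [|kl|kl].
    by apply: sw_ext => p q; rewrite !mulrA.
  transitivity (eps y *: SW (fun a b => a * S b) x).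
    rewrite (swnat (L := fun m => eps y *: m)); [|kl|kl].
    by apply: sw_ext => a b; rewrite -scalerAr -scalerAl mulr1.
  by rewrite (proj2 (antip x)) scalerA mulrC -scalerA.
- move=> x y; rewrite /cv2 /cu2.
  rewrite scalerA -emul -(proj1 (antip (x * y))) swmul; last by kl.
  by [].
Qed.

Local Notation mHH := (mulT (T := HH)).
Local Notation oHH := (tp_mul HH 1 1).

Lemma DmulT h g : Delta (h * g) = mHH (Delta h) (Delta g).
Proof. exact: Dmul. Qed.

Lemma DS h : Delta (S h) = SW (fun x y => tp_mul HH (S y) (S x)) h.
Proof.
have hm : kbilinear mHH by exact: mulT_bil.
have hma : forall a b c, mHH (mHH a b) c = mHH a (mHH b c) by exact: mulT_assoc.
have hm1 : forall Y, mHH oHH Y = Y by exact: mulT1l.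
have hm2 : forall Y, mHH Y oHH = Y by exact: mulT1r.
have htp : kbilinear (tp_mul HH) by exact: tpbil.
pose i1 x := tp_mul HH x 1.
pose i2 x := tp_mul HH 1 x.
have hi1 : klinear i1 by rewrite /i1; kl.
have hi2 : klinear i2 by rewrite /i2; kl.
have eD : forall h, Delta h = cv mHH i1 i2 h.
  move=> x; rewrite -sw_tp; apply: sw_ext => a b.
  by rewrite /i1 /i2 mulT_pure mulr1 mul1r.
have eP : forall h, SW (fun x y => tp_mul HH (S y) (S x)) h = cv mHH (fun x => i2 (S x)) (fun x => i1 (S x)) h.
  move=> x; apply: sw_ext => a b.
  by rewrite /i1 /i2 mulT_pure mulr1 mul1r.
apply: (@cv_inv_uniq _ mHH oHH hm hma hm1 hm2 Delta (fun h => Delta (S h)) (fun h => SW (fun x y => tp_mul HH (S y) (S x)) h)); [kl|kl|kl| |].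
- move=> x; rewrite /cv /cu.
  transitivity (Delta (SW (fun a b => a * S b) x)).
    by rewrite (swnat (L := Delta)); [apply: sw_ext => a b; rewrite DmulT|kl|kl].
  by rewrite (proj2 (antip x)) (klinZ _ _ hD) D1.
- move=> x.
  rewrite (cv_extl _ _ (f' := cv mHH (fun x => i2 (S x)) (fun x => i1 (S x)))) => [|y]; last by rewrite eP.
  rewrite (cv_extr _ _ (g' := cv mHH i1 i2)) => [|y]; last by rewrite eD.
  rewrite cv_assoc //; try kl.
  rewrite (cv_extr _ _ (g' := cv mHH (cv mHH (fun x => i1 (S x)) i1) i2)) => [|y]; last by rewrite cv_assoc //; kl.
  rewrite (cv_extr _ _ (g' := cv mHH (cu oHH) i2)) => [|y].
    rewrite (cv_extr _ _ (g' := i2)) => [|y]; last by rewrite cu_l.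
    rewrite /cv /cu; transitivity (i2 (SW (fun a b => S a * b) x)).
      rewrite (swnat (L := i2)); [|kl|kl].
      by apply: sw_ext => a b; rewrite /i2 mulT_pure mulr1.
    by rewrite (proj1 (antip x)) (klinZ _ _ hi2).
  apply: cv_extl => z.
  rewrite /cv /cu; transitivity (i1 (SW (fun a b => S a * b) z)).
    rewrite (swnat (L := i1)); [|kl|kl].
    by apply: sw_ext => a b; rewrite /i1 mulT_pure mulr1.
  by rewrite (proj1 (antip z)) (klinZ _ _ hi1).
Qed.

Lemma swS (P : lmodType k) (f : H -> H -> P) h : kbilinear f ->
  SW f (S h) = SW (fun x y => f (S x) (S y)) h.
Proof.
move=> hf; rewrite {1}/sw DS (swnat (L := tp_lift HH f)); [|exact: tp_lift_linear|].
  rewrite swap; last by kl.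
  by apply: sw_ext => x y; rewrite tp_lift_mul.
have htp : kbilinear (tp_mul HH) by exact: tpbil.
kl.
Qed.

Lemma SS h : S (S h) = h.
Proof.
have hm := mul_bil H.
apply: (@cv_inv_uniq _ (fun a b : H => a * b) 1 hm (fun a b c => esym (@mulrA H a b c)) (@mul1r H) (@mulr1 H) S (fun x => S (S x)) (fun x => x) hS (klin_comp hS hS) (@klin_id _ H)).
- move=> x; rewrite /cv /cu.
  transitivity (S (SW (fun a b => S a * b) x)).
    rewrite (swnat (L := S)); [|kl|kl].
    rewrite swap; last by kl.
    by apply: sw_ext => a b; rewrite S_anti.
  by rewrite (proj1 (antip x)) (klinZ _ _ hS) S1.
- by move=> x; rewrite /cv /cu (proj2 (antip x)).
Qed.

Hypothesis hr : klinear rho.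
Hypothesis rmul : forall a c, rho (a * c) =
      swA rho (fun a1 x => swA rho (fun c1 y => tp_mul AH (a1 * c1) (x * y)) c) a.
Hypothesis r1 : rho 1 = tp_mul AH 1 1.

Local Notation mAH := (mulT (T := AH)).
Local Notation oAH := (tp_mul AH 1 1).
Local Notation mA := (fun a b : A => a * b).
Local Notation cvA := (cv mA).
Local Notation cvAH := (cv mAH).

Lemma rmulT a c : rho (a * c) = mAH (rho a) (rho c).
Proof. exact: rmul. Qed.

Definition j1 (a : A) : AH := tp_mul AH a 1.
Definition j2 (x : H) : AH := tp_mul AH 1 x.

Lemma j1_lin : klinear j1. Proof. have h := tpbil AH; rewrite /j1; kl. Qed.
Lemma j2_lin : klinear j2. Proof. have h := tpbil AH; rewrite /j2; kl. Qed.
Lemma mAH_bil : kbilinear mAH. Proof. exact: mulT_bil. Qed.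
Lemma mAH_assoc a b c : mAH (mAH a b) c = mAH a (mAH b c). Proof. exact: mulT_assoc. Qed.
Lemma mAH1l a : mAH oAH a = a. Proof. exact: mulT1l. Qed.
Lemma mAH1r a : mAH a oAH = a. Proof. exact: mulT1r. Qed.
Lemma j11 a b : mAH (j1 a) (j1 b) = j1 (a * b). Proof. by rewrite /j1 mulT_pure mulr1. Qed.
Lemma j22 a b : mAH (j2 a) (j2 b) = j2 (a * b). Proof. by rewrite /j2 mulT_pure mulr1. Qed.
Lemma j12 a b : mAH (j1 a) (j2 b) = tp_mul AH a b. Proof. by rewrite /j1 /j2 mulT_pure mulr1 mul1r. Qed.
Lemma j21 a b : mAH (j2 b) (j1 a) = tp_mul AH a b. Proof. by rewrite /j1 /j2 mulT_pure mulr1 mul1r. Qed.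

Lemma mA_bil : kbilinear mA. Proof. exact: mul_bil. Qed.
Lemma mA_assoc (a b c : A) : a * b * c = a * (b * c). Proof. by rewrite mulrA. Qed.

Definition coinvF (f : H -> A) := forall h, rho (f h) = j1 (f h).
Definition colinF (f : H -> A) := forall h, rho (f h) = cvAH (fun x => j1 (f x)) j2 h.
Definition acolF (f : H -> A) := forall h, rho (f h) = cvAH (fun x => j2 (S x)) (fun x => j1 (f x)) h.

Lemma colinE f : colinear Delta rho f <-> colinF f.
Proof.
split=> e h; rewrite e; apply: sw_ext => x y; by rewrite j12.
Qed.
Lemma acolE f : (forall h, rho (f h) = SW (fun x y => tp_mul AH (f y) (S x)) h) <-> acolF f.
Proof.
split=> e h; rewrite e; apply: sw_ext => x y; by rewrite j21.
Qed.

Lemma rho_cv f g h : klinear f -> klinear g ->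
  rho (cvA f g h) = cvAH (fun x => rho (f x)) (fun x => rho (g x)) h.
Proof.
have hm := mA_bil.
move=> hf hg; rewrite /cv (swnat (L := rho)); [|kl|kl].
by apply: sw_ext => x y; rewrite rmulT.
Qed.

Lemma cvAH_j1 f g h : klinear f -> klinear g ->
  cvAH (fun x => j1 (f x)) (fun x => j1 (g x)) h = j1 (cvA f g h).
Proof.
have hm := mA_bil; have hj := j1_lin.
move=> hf hg; rewrite /cv (swnat (L := j1)); [|kl|kl].
by apply: sw_ext => x y; rewrite j11.
Qed.
Lemma cvAH_j2S h : cvAH j2 (fun x => j2 (S x)) h = cu oAH h.
Proof.
have hm := mul_bil H; have hj := j2_lin.
rewrite /cv /cu; transitivity (j2 (SW (fun a b => a * S b) h)).
  by rewrite (swnat (L := j2)); [apply: sw_ext => a b; rewrite j22|kl|kl].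
by rewrite (proj2 (antip h)) (klinZ _ _ hj).
Qed.
Lemma cvAH_Sj2 h : cvAH (fun x => j2 (S x)) j2 h = cu oAH h.
Proof.
have hm := mul_bil H; have hj := j2_lin.
rewrite /cv /cu; transitivity (j2 (SW (fun a b => S a * b) h)).
  by rewrite (swnat (L := j2)); [apply: sw_ext => a b; rewrite j22|kl|kl].
by rewrite (proj1 (antip h)) (klinZ _ _ hj).
Qed.

Lemma cvAHA f g l h : klinear f -> klinear g -> klinear l ->
  cvAH (cvAH f g) l h = cvAH f (cvAH g l) h.
Proof. exact: (cv_assoc mAH_bil mAH_assoc). Qed.
Lemma cvAH_cul f h : klinear f -> cvAH (cu oAH) f h = f h.
Proof. exact: (cu_l mAH_bil mAH1l). Qed.
Lemma cvAH_cur f h : klinear f -> cvAH f (cu oAH) h = f h.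
Proof. exact: (cu_r mAH_bil mAH1r). Qed.
Lemma cvAA f g l h : klinear f -> klinear g -> klinear l ->
  cvA (cvA f g) l h = cvA f (cvA g l) h.
Proof. exact: (cv_assoc mA_bil mA_assoc). Qed.
Lemma cvA_cul f h : klinear f -> cvA (cu 1) f h = f h.
Proof. exact: (cu_l mA_bil (@mul1r A)). Qed.
Lemma cvA_cur f h : klinear f -> cvA f (cu 1) h = f h.
Proof. exact: (cu_r mA_bil (@mulr1 A)). Qed.

Ltac linAH := have ? := mAH_bil; have ? := j1_lin; have ? := j2_lin; have ? := mA_bil.

Lemma j1cu h : j1 (cu 1 h) = cu oAH h.
Proof. by rewrite /cu (klinZ _ _ j1_lin). Qed.

Lemma cleave_acol T' U' : klinear T' -> klinear U' -> colinF T' ->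
  (forall h, cvA T' U' h = cu 1 h) -> (forall h, cvA U' T' h = cu 1 h) -> acolF U'.
Proof.
move=> hT hU cT e1' e2 h; linAH.
apply: (@cv_inv_uniq _ mAH oAH mAH_bil mAH_assoc mAH1l mAH1r
  (fun x => rho (T' x)) (fun x => rho (U' x)) (cvAH (fun x => j2 (S x)) (fun x => j1 (U' x)))); [kl|kl|apply: cv_lin; kl| |].
- by move=> x; rewrite -rho_cv // e1' /cu (klinZ _ _ hr) r1.
- move=> x; rewrite (cv_extr _ _ (g' := cvAH (fun x => j1 (T' x)) j2)) => [|y]; last by rewrite cT.
  rewrite cvAHA; [|kl|kl|apply: cv_lin; kl].
  rewrite (cv_extr _ _ (g' := cvAH (cvAH (fun x => j1 (U' x)) (fun x => j1 (T' x))) j2)) => [|y]; last by rewrite cvAHA //; kl.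
  rewrite (cv_extr _ _ (g' := cvAH (cu oAH) j2)) => [|y].
    rewrite (cv_extr _ _ (g' := j2)) => [|y]; last by rewrite cvAH_cul.
    exact: cvAH_Sj2.
  by apply: cv_extl => z; rewrite cvAH_j1 // e2 j1cu.
Qed.

Lemma cvAH_comm f g h : klinear f -> klinear g ->
  (forall x y, mAH (f x) (g y) = mAH (g y) (f x)) -> cvAH f g h = cvAH g f h.
Proof. exact: (cv_comm mAH_bil). Qed.
Lemma cvA_comm f g h : klinear f -> klinear g ->
  (forall x y, f x * g y = g y * f x) -> cvA f g h = cvA g f h.
Proof. exact: (cv_comm mA_bil). Qed.

Lemma j12c a x : mAH (j1 a) (j2 x) = mAH (j2 x) (j1 a).
Proof. by rewrite j12 j21. Qed.

Lemma coinv_cv f g : klinear f -> klinear g -> coinvF f -> coinvF g -> coinvF (cvA f g).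
Proof.
move=> hf hg cf cg h; linAH; rewrite rho_cv // -cvAH_j1 //.
by apply: sw_ext => x y; rewrite cf cg.
Qed.

Lemma coinv_col_acol f g : klinear f -> klinear g -> colinF f -> acolF g -> coinvF (cvA f g).
Proof.
move=> hf hg cf cg h; linAH; rewrite rho_cv //.
rewrite (cv_extl _ _ (f' := cvAH (fun x => j1 (f x)) j2)) => [|y]; last by rewrite cf.
rewrite (cv_extr _ _ (g' := cvAH (fun x => j2 (S x)) (fun x => j1 (g x)))) => [|y]; last by rewrite cg.
rewrite cvAHA; [|kl|kl|apply: cv_lin; kl].
rewrite (cv_extr _ _ (g' := cvAH (cvAH j2 (fun x => j2 (S x))) (fun x => j1 (g x)))) => [|y]; last by rewrite cvAHA //; kl.
rewrite (cv_extr _ _ (g' := (fun x => j1 (g x)))) => [|y]; last first.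
  by rewrite (cv_extl _ _ (f' := cu oAH)) => [|z]; [rewrite cvAH_cul //; kl|rewrite cvAH_j2S].
by rewrite cvAH_j1.
Qed.

Lemma coinv_acol_col g f : klinear f -> klinear g -> acolF g -> colinF f -> coinvF (cvA g f).
Proof.
move=> hf hg cg cf h; linAH; rewrite rho_cv //.
rewrite (cv_extl _ _ (f' := cvAH (fun x => j2 (S x)) (fun x => j1 (g x)))) => [|y]; last by rewrite cg.
rewrite (cv_extr _ _ (g' := cvAH (fun x => j1 (f x)) j2)) => [|y]; last by rewrite cf.
rewrite cvAHA; [|kl|kl|apply: cv_lin; kl].
rewrite (cv_extr _ _ (g' := cvAH (fun x => j1 (cvA g f x)) j2)) => [|y]; last first.
  by rewrite -cvAHA; [apply: cv_extl => z; rewrite cvAH_j1|kl|kl|kl].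
rewrite -cvAHA; [|kl|apply: (klin_comp j1_lin); apply: cv_lin; kl|kl].
rewrite (cv_extl _ _ (f' := cvAH (fun x => j1 (cvA g f x)) (fun x => j2 (S x)))) => [|y]; last first.
  by apply: cvAH_comm => [||x z]; [kl|apply: (klin_comp j1_lin); apply: cv_lin; kl|rewrite j12c].
rewrite cvAHA; [|apply: (klin_comp j1_lin); apply: cv_lin; kl|kl|kl].
rewrite (cv_extr _ _ (g' := cu oAH)) => [|y]; last exact: cvAH_Sj2.
by rewrite cvAH_cur //; apply: (klin_comp j1_lin); apply: cv_lin; kl.
Qed.

Lemma colin_coinv_col f g : klinear f -> klinear g -> coinvF f -> colinF g -> colinF (cvA f g).
Proof.
move=> hf hg cf cg h; linAH; rewrite rho_cv //.
rewrite (cv_extl _ _ (f' := fun x => j1 (f x))) => [|y]; last by rewrite cf.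
rewrite (cv_extr _ _ (g' := cvAH (fun x => j1 (g x)) j2)) => [|y]; last by rewrite cg.
rewrite -cvAHA; [|kl|kl|kl].
by apply: cv_extl => z; rewrite cvAH_j1.
Qed.

Lemma colin_col_coinv g f : klinear f -> klinear g -> colinF g -> coinvF f -> colinF (cvA g f).
Proof.
move=> hf hg cg cf h; linAH; rewrite rho_cv //.
rewrite (cv_extr _ _ (g' := fun x => j1 (f x))) => [|y]; last by rewrite cf.
rewrite (cv_extl _ _ (f' := cvAH (fun x => j1 (g x)) j2)) => [|y]; last by rewrite cg.
rewrite cvAHA; [|kl|kl|kl].
rewrite (cv_extr _ _ (g' := cvAH (fun x => j1 (f x)) j2)) => [|y]; last first.
  by apply: cvAH_comm => [||x z]; [kl|kl|rewrite j12c].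
rewrite -cvAHA; [|kl|kl|kl].
by apply: cv_extl => z; rewrite cvAH_j1.
Qed.

Lemma acol_coinv_acol f g : klinear f -> klinear g -> coinvF f -> acolF g -> acolF (cvA f g).
Proof.
move=> hf hg cf cg h; linAH; rewrite rho_cv //.
rewrite (cv_extl _ _ (f' := fun x => j1 (f x))) => [|y]; last by rewrite cf.
rewrite (cv_extr _ _ (g' := cvAH (fun x => j2 (S x)) (fun x => j1 (g x)))) => [|y]; last by rewrite cg.
rewrite -cvAHA; [|kl|kl|kl].
rewrite (cv_extl _ _ (f' := cvAH (fun x => j2 (S x)) (fun x => j1 (f x)))) => [|y]; last first.
  by apply: cvAH_comm => [||x z]; [kl|kl|rewrite j12c].
rewrite cvAHA; [|kl|kl|kl].
by apply: cv_extr => z; rewrite cvAH_j1.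
Qed.

Lemma acol_acol_coinv g f : klinear f -> klinear g -> acolF g -> coinvF f -> acolF (cvA g f).
Proof.
move=> hf hg cg cf h; linAH; rewrite rho_cv //.
rewrite (cv_extr _ _ (g' := fun x => j1 (f x))) => [|y]; last by rewrite cf.
rewrite (cv_extl _ _ (f' := cvAH (fun x => j2 (S x)) (fun x => j1 (g x)))) => [|y]; last by rewrite cg.
rewrite cvAHA; [|kl|kl|kl].
by apply: cv_extr => z; rewrite cvAH_j1.
Qed.

Variables (t u : H -> A).
Hypothesis ht : klinear t.
Hypothesis hu : klinear u.
Hypothesis hct : colinear Delta rho t.
Hypothesis tu : forall h, conv Delta t u h = cunit A eps h.
Hypothesis ut : forall h, conv Delta u t h = cunit A eps h.
Hypothesis Bcomm : forall b1 b2, coinv rho b1 -> coinv rho b2 -> b1 * b2 = b2 * b1.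

Lemma cvAAF f g l : klinear f -> klinear g -> klinear l -> cvA (cvA f g) l = cvA f (cvA g l).
Proof. by move=> *; apply: functional_extensionality => h; rewrite cvAA. Qed.
Lemma cvA_culF f : klinear f -> cvA (cu 1) f = f.
Proof. by move=> *; apply: functional_extensionality => h; rewrite cvA_cul. Qed.
Lemma cvA_curF f : klinear f -> cvA f (cu 1) = f.
Proof. by move=> *; apply: functional_extensionality => h; rewrite cvA_cur. Qed.

Lemma tuF : cvA t u = cu 1.
Proof. by apply: functional_extensionality => h; exact: tu. Qed.
Lemma utF : cvA u t = cu 1.
Proof. by apply: functional_extensionality => h; exact: ut. Qed.

Lemma colin_t : colinF t.
Proof. exact/colinE. Qed.
Lemma acol_u : acolF u.
Proof. exact: (cleave_acol ht hu colin_t tu ut). Qed.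

Lemma coinvE b : coinv rho b <-> rho b = j1 b.
Proof. by []. Qed.

Lemma coinvZ c b : coinv rho b -> coinv rho (c *: b).
Proof. by rewrite /coinv => e; rewrite (klinZ _ _ hr) e -(klinZ _ _ j1_lin). Qed.

Lemma acol_lmul b g : klinear g -> coinv rho b -> acolF g -> acolF (fun y => b * g y).
Proof.
move=> hg cb cg h; linAH; rewrite rmulT cb cg /cv (swnat (L := mAH (j1 b))); [|kl|kl].
by apply: sw_ext => x y; rewrite -mAH_assoc j12c mAH_assoc j11.
Qed.

Lemma cvA_lin f g : klinear f -> klinear g -> klinear (cvA f g).
Proof. exact: (cv_lin mA_bil). Qed.
Lemma act_linh b : klinear (fun h => act Delta t u h b).
Proof. rewrite /act; kl. Qed.
Ltac klin_hook ::= first [ apply: cvA_lin | apply: act_linh ].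

Lemma act_cv h b : act Delta t u h b = cvA t (fun y => b * u y) h.
Proof. by rewrite /act /cv; apply: sw_ext => x y; rewrite mulrA. Qed.

Lemma act_coinv h b : coinv rho b -> coinv rho (act Delta t u h b).
Proof.
move=> cb; have := mA_bil => hm; rewrite act_cv.
apply: (coinv_col_acol ht) => //; [kl|exact: colin_t|].
by apply: acol_lmul => //; exact: acol_u.
Qed.

Lemma act_one h : act Delta t u h 1 = cu 1 h.
Proof. rewrite act_cv; transitivity (cvA t u h); [by apply: cv_extr => y; rewrite mul1r|exact: tu]. Qed.

Lemma cvA_lmul b f g h : klinear f -> klinear g -> cvA f (fun y => b * g y) h = SW (fun x y => f x * b * g y) h.
Proof. by move=> *; apply: sw_ext => x y; rewrite mulrA. Qed.

Lemma cvA_lmulr b f g h : klinear f -> klinear g -> cvA (fun y => b * f y) g h = b * cvA f g h.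
Proof. have hm := mA_bil; move=> *; rewrite /cv (swnat (L := fun a => b * a)); [|kl|kl].
by apply: sw_ext => x y; rewrite mulrA. Qed.

Lemma cvA_epsl b g h : klinear g -> cvA (fun x => eps x *: b) g h = b * g h.
Proof.
move=> hg; rewrite -(counitl (F := fun y => b * g y)); last by kl.
by apply: sw_ext => x y; rewrite scalerAl.
Qed.

Lemma act_mul h b c : act Delta t u h (b * c) = cvA (fun h => act Delta t u h b) (fun h => act Delta t u h c) h.
Proof.
have hm := mA_bil.
have e : forall b, (fun h => act Delta t u h b) = cvA t (fun y => b * u y).
  by move=> b'; apply: functional_extensionality => x; rewrite act_cv.
rewrite !e cvAAF; [|kl|kl|apply: cv_lin; kl].
rewrite -(cvAAF (f := fun y => b * u y)); [|kl|kl|kl].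
have -> : cvA (fun y => b * u y) t = fun x => eps x *: b.
  by apply: functional_extensionality => x; rewrite cvA_lmulr // utF /cu mulr_algr.
rewrite act_cv; apply: cv_extr => y.
by rewrite cvA_epsl ?mulrA //; kl.
Qed.

Lemma cvA_lmulF b f g : klinear f -> klinear g -> (fun y => b * cvA f g y) = cvA (fun y => b * f y) g.
Proof. by move=> *; apply: functional_extensionality => y; rewrite cvA_lmulr. Qed.

Lemma act_indep T' U' b h : klinear T' -> klinear U' -> colinF T' ->
  cvA T' U' = cu 1 -> cvA U' T' = cu 1 -> coinv rho b ->
  act Delta t u h b = SW (fun x y => T' x * b * U' y) h.
Proof.
move=> hT hU cT e1' e2 cb.
have hm := mA_bil.
have cU : acolF U'.
  by apply: (cleave_acol hT hU cT) => x; [rewrite e1'|rewrite e2].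
pose g := cvA T' u; pose g' := cvA t U'.
have cg : coinvF g by apply: coinv_col_acol => //; exact: acol_u.
have cg' : coinvF g' by apply: coinv_col_acol => //; exact: colin_t.
have eT : T' = cvA g t by rewrite /g cvAAF // utF cvA_curF.
have eU : U' = cvA u g' by rewrite /g' -cvAAF // utF cvA_culF.
rewrite -cvA_lmul //; symmetry.
have -> : (fun y => b * U' y) = cvA (fun y => b * u y) g'.
  by rewrite {1}eU cvA_lmulF //; kl.
rewrite {1}eT cvAAF; [|kl|kl|kl].
rewrite -(cvAAF (f := t)); [|kl|kl|kl].
rewrite -(cvAAF (f := g)); [|kl|kl|kl].
have ea : cvA t (fun y => b * u y) = fun h => act Delta t u h b.
  by apply: functional_extensionality => x; rewrite act_cv.
rewrite ea.
have -> : cvA g (fun h => act Delta t u h b) = cvA (fun h => act Delta t u h b) g.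
  apply: functional_extensionality => x; apply: cvA_comm => [||y z]; [kl|kl|].
  by apply: Bcomm; [exact: cg|exact: act_coinv].
rewrite cvAAF; [|kl|kl|kl].
have -> : cvA g g' = cu 1.
  rewrite /g /g' cvAAF; [|kl|kl|kl].
  by rewrite -(cvAAF (f := u)) ?utF ?cvA_culF //; kl.
by rewrite cvA_curF //; kl.
Qed.

Lemma omega_cleave g : OmegaA Delta rho g ->
  [/\ klinear (fun x => g (S x)), colinF g, cvA g (fun x => g (S x)) = cu 1 & cvA (fun x => g (S x)) g = cu 1].
Proof.
case=> hg cg gm g1; split; [kl|exact/colinE| |].
- apply: functional_extensionality => x; rewrite /cv.
  transitivity (g (SW (fun a b => a * S b) x)).
    by rewrite (swnat (L := g)); [apply: sw_ext => a b; rewrite gm|kl|kl].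
  by rewrite (proj2 (antip x)) (klinZ _ _ hg) g1.
- apply: functional_extensionality => x; rewrite /cv.
  transitivity (g (SW (fun a b => S a * b) x)).
    by rewrite (swnat (L := g)); [apply: sw_ext => a b; rewrite gm|kl|kl].
  by rewrite (proj1 (antip x)) (klinZ _ _ hg) g1.
Qed.

Lemma act_omega g b h : OmegaA Delta rho g -> coinv rho b ->
  act Delta t u h b = SW (fun x y => g x * b * g (S y)) h.
Proof.
move=> og cb; have [hgS cg e1' e2] := omega_cleave og.
by case: og => hg _ _ _; apply: act_indep.
Qed.

Local Notation cvA2 := (cv2 mA).
Local Notation cuA2 := (cu2 (1 : A)).
Definition P1 (f : H -> A) := fun h k : H => eps k *: f h.
Definition P2 (f : H -> A) := fun h k : H => eps h *: f k.
Definition Mm (f : H -> A) := fun h k : H => f (h * k).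
Definition Act (v : H -> A) := fun h k : H => act Delta t u h (v k).

Ltac klin_hook ::= first [ apply: cvA_lin | apply: act_linh
   | progress rewrite ?/P1 ?/P2 ?/Mm ?/Act ?/cv2 ?/act ?/cu2 ?/cu ].

Lemma cvA2A F G K : kbilinear F -> kbilinear G -> kbilinear K ->
  cvA2 (cvA2 F G) K = cvA2 F (cvA2 G K).
Proof. by move=> *; apply: funext2 => h g; apply: (cv2_assoc mA_bil mA_assoc). Qed.
Lemma cvA2_cul F : kbilinear F -> cvA2 cuA2 F = F.
Proof. by move=> *; apply: funext2 => h g; apply: (cu2_l mA_bil (@mul1r A)). Qed.
Lemma cvA2_cur F : kbilinear F -> cvA2 F cuA2 = F.
Proof. by move=> *; apply: funext2 => h g; apply: (cu2_r mA_bil (@mulr1 A)). Qed.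
Lemma cvA2_comm F G : kbilinear F -> kbilinear G ->
  (forall x y a b, F x a * G y b = G y b * F x a) -> cvA2 F G = cvA2 G F.
Proof. by move=> *; apply: funext2 => h g; apply: (cv2_comm mA_bil). Qed.

Lemma swcu2 (P : lmodType k) (c : P) h : SW (fun a b => eps a *: (eps b *: c)) h = eps h *: c.
Proof. by rewrite (counitl (F := fun b => eps b *: c)) //; kl. Qed.

Lemma P11 f g : klinear f -> klinear g -> cvA2 (P1 f) (P1 g) = P1 (cvA f g).
Proof.
have hm := mA_bil.
move=> hf hg; apply: funext2 => h l; rewrite /cv2 /P1 /cv.
rewrite (swnat (L := fun a => eps l *: a)); [|kl|kl].
apply: sw_ext => x y.
rewrite -swcu2; apply: sw_ext => a b.
by rewrite -!scalerAl -!scalerAr !scalerA mulrC.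
Qed.
Lemma P22 f g : klinear f -> klinear g -> cvA2 (P2 f) (P2 g) = P2 (cvA f g).
Proof.
have hm := mA_bil.
move=> hf hg; apply: funext2 => h l; rewrite /cv2 /P2 /cv.
rewrite -(swcu2 (SW (fun a b => f a * g b) l) h).
apply: sw_ext => x y.
rewrite (swnat (L := fun a => eps x *: (eps y *: a))); [|kl|kl].
apply: sw_ext => a b.
by rewrite -!scalerAl -!scalerAr.
Qed.
Lemma P12 f g h l : klinear f -> klinear g -> cvA2 (P1 f) (P2 g) h l = f h * g l.
Proof.
have hm := mA_bil.
move=> hf hg; rewrite /cv2 /P1 /P2.
rewrite -(counitr (F := fun x => f x * g l) h); last by kl.
apply: sw_ext => x y.
rewrite -(counitl (F := fun b => eps y *: (f x * g b)) l); last by kl.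
apply: sw_ext => a b.
by rewrite -!scalerAl -!scalerAr !scalerA mulrC.
Qed.
Lemma P21 f g h l : klinear f -> klinear g -> cvA2 (P2 g) (P1 f) h l = g l * f h.
Proof.
have hm := mA_bil.
move=> hf hg; rewrite /cv2 /P1 /P2.
rewrite -(counitl (F := fun x => g l * f x) h); last by kl.
apply: sw_ext => x y.
rewrite -(counitr (F := fun b => eps x *: (g b * f y)) l); last by kl.
apply: sw_ext => a b.
by rewrite -!scalerAl -!scalerAr !scalerA mulrC.
Qed.
Lemma MmM f g : klinear f -> klinear g -> cvA2 (Mm f) (Mm g) = Mm (cvA f g).
Proof.
have hm := mA_bil.
by move=> hf hg; apply: funext2 => h l; rewrite /Mm /cv swmul //; kl.
Qed.
Lemma P1cu : P1 (cu 1) = cuA2.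
Proof. by apply: funext2 => h l; rewrite /P1 /cu /cu2 scalerA mulrC -scalerA. Qed.
Lemma P2cu : P2 (cu 1) = cuA2.
Proof. by []. Qed.

Lemma act_linb h : klinear (act Delta t u h).
Proof. rewrite /act; kl. Qed.

Lemma ActP1 c h l : klinear c ->
  cvA2 (Act c) (P1 c) h l = SW (fun x y => act Delta t u x (c l) * c y) h.
Proof.
move=> hc; rewrite /cv2 /Act /P1; apply: sw_ext => x y.
rewrite -(counitr (F := fun a => act Delta t u x (c a) * c y) l); last by kl.
by apply: sw_ext => a b; rewrite scalerAr.
Qed.

Lemma ActAct w v : klinear w -> klinear v -> cvA2 (Act w) (Act v) = Act (cvA w v).
Proof.
move=> hw hv; apply: funext2 => h l; rewrite /cv2 /Act.
rewrite fubini; last by split=> *; kl.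
transitivity (SW (fun a b => act Delta t u h (w a * v b)) l).
  by apply: sw_ext => a b; rewrite act_mul.
by rewrite /cv (swnat (L := act Delta t u h)) //; [exact: act_linb|kl].
Qed.

Lemma ActOmega g v : OmegaA Delta rho g -> klinear v -> coinvF v ->
  Act v = cvA2 (cvA2 (P1 g) (P2 v)) (P1 (fun x => g (S x))).
Proof.
move=> og hv cv'; have [hgS cg _ _] := omega_cleave og.
have hg : klinear g by case: og.
apply: funext2 => h l; rewrite /Act (@act_omega g (v l) h og (cv' l)).
rewrite {2}/cv2; apply: sw_ext => x y.
transitivity (cvA2 (P1 g) (P2 v) x l * g (S y)); first by rewrite P12.
rewrite -(counitr (F := fun a => cvA2 (P1 g) (P2 v) x a * g (S y)) l); last by kl.
by apply: sw_ext => a b; rewrite /P1 scalerAr.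
Qed.

Lemma MmOmega g : OmegaA Delta rho g -> Mm g = cvA2 (P1 g) (P2 g).
Proof.
by case=> hg _ gm _; apply: funext2 => h l; rewrite P12 // /Mm gm.
Qed.

Lemma MmOmegaS g : OmegaA Delta rho g -> Mm (fun x => g (S x)) = cvA2 (P2 (fun x => g (S x))) (P1 (fun x => g (S x))).
Proof.
case=> hg _ gm _; apply: funext2 => h l; rewrite P21; [|kl|kl].
by rewrite /Mm S_anti gm.
Qed.

Lemma P2P1_comm f g : klinear f -> klinear g -> coinvF f -> coinvF g ->
  cvA2 (P1 f) (P2 g) = cvA2 (P2 g) (P1 f).
Proof.
move=> hf hg cf cg; apply: cvA2_comm; [kl|kl|] => x y a b.
rewrite /P1 /P2 -scalerAl -scalerAr -scalerAr -scalerAl Bcomm; first [exact: cf|exact: cg|done].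
Qed.

Lemma funE (f g : H -> A) : (forall h, f h = g h) -> f = g.
Proof. exact: functional_extensionality. Qed.

Lemma t1coinv : coinv rho (t 1).
Proof. have htp : kbilinear (tp_mul AH) by exact: tpbil.
by rewrite /coinv hct sw1 //; kl. Qed.

Lemma act1 b : coinv rho b -> act Delta t u 1 b = b.
Proof.
move=> cb; rewrite /act sw1; last by kl.
rewrite (Bcomm t1coinv cb).
by rewrite -mulrA; have := tu 1; rewrite /conv sw1; [move=> ->; rewrite /cunit e1 scale1r mulr1|kl].
Qed.

Definition Z1' v := [/\ klinear v, coinvF v,
  (exists w, [/\ klinear w, coinvF w, cvA v w = cu 1 & cvA w v = cu 1]) &
  Mm v = cvA2 (Act v) (P1 v)].

Lemma Z1P v : Z1 Delta eps rho t u v <-> Z1' v.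
Proof.
split.
- case=> [[hv cv'] [[w [[hw cw] [e1' e2]]] coc]]; split => //.
  + by exists w; split => //; apply: funE.
  + by apply: funext2 => h l; rewrite ActP1 // /Mm coc.
- case=> hv cv' [w [hw cw e1' e2]] coc; split; [by []|split].
  + by exists w; split; [by []|split => h; [exact: (congr1 (fun F => F h) e1')|exact: (congr1 (fun F => F h) e2)]].
  + by move=> h l; rewrite -ActP1 // -coc.
Qed.

Lemma Z1_one v : Z1 Delta eps rho t u v -> v 1 = 1.
Proof.
move/Z1P=> [hv cv' [w [hw cw e1' e2]] coc].
have e : v 1 = v 1 * v 1.
  have := congr1 (fun F => F 1 1) coc; rewrite /Mm mulr1 ActP1 // sw1; last by kl.
  by rewrite act1 //; exact: cv'.
have ewv : w 1 * v 1 = 1.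
  by have := congr1 (fun F => F 1) e2; rewrite /cv sw1 ?/cu ?e1 ?scale1r //; kl.
by move: (congr1 (fun z => w 1 * z) e); rewrite mulrA ewv mul1r => <-.
Qed.

Lemma coinv_Act v h l : coinvF v -> coinv rho (Act v h l).
Proof. by move=> cv'; apply: act_coinv; exact: cv'. Qed.
Lemma coinv_P1 v h l : coinvF v -> coinv rho (P1 v h l).
Proof. by move=> cv'; apply: coinvZ; exact: cv'. Qed.
Lemma coinv_P2 v h l : coinvF v -> coinv rho (P2 v h l).
Proof. by move=> cv'; apply: coinvZ; exact: cv'. Qed.

Lemma cvA2_commB F G : kbilinear F -> kbilinear G ->
  (forall x a, coinv rho (F x a)) -> (forall y b, coinv rho (G y b)) -> cvA2 F G = cvA2 G F.
Proof. by move=> hF hG cF cG; apply: cvA2_comm => // x y a b; apply: Bcomm. Qed.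

Lemma case1 w v : Z1' w -> Z1' v -> Z1' (cvA w v).
Proof.
move=> [hw cw [w' [hw' cw' ww' w'w]] cocw] [hv cv' [v' [hv' cv'' vv' v'v]] cocv].
split.
- kl.
- exact: coinv_cv.
- exists (cvA v' w'); split; [kl|exact: coinv_cv| |].
  + rewrite cvAAF; [|kl|kl|kl]. rewrite -(cvAAF (f := v)) // vv' cvA_culF //.
  + rewrite cvAAF; [|kl|kl|kl]. rewrite -(cvAAF (f := w')) // w'w cvA_culF //.
- rewrite -MmM // cocw cocv -ActAct // -P11 //.
  rewrite (cvA2A (F := Act w)); [|kl|kl|kl].
  rewrite -(cvA2A (F := P1 w)); [|kl|kl|kl].
  rewrite (cvA2_commB (F := P1 w) (G := Act v)); [|kl|kl|move=> *; exact: coinv_P1|move=> *; exact: coinv_Act].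
  rewrite (cvA2A (F := Act v)); [|kl|kl|kl].
  by rewrite -(cvA2A (F := Act w)); [|kl|kl|kl].
Qed.

Ltac norm2 := rewrite ?cvA2A; try solve [kl].

Lemma acol_omegaS g : OmegaA Delta rho g -> acolF (fun x => g (S x)).
Proof.
case=> hg cg _ _; apply/acolE => h.
have htp : kbilinear (tp_mul AH) by exact: tpbil.
rewrite cg swS; last by kl.
by rewrite swap; last by kl.
Qed.

Lemma cancel2 f f' X : klinear f -> klinear f' -> kbilinear X -> cvA f f' = cu 1 ->
  cvA2 (P1 f) (cvA2 (P1 f') X) = X.
Proof.
move=> hf hf' hX e; rewrite -cvA2A; [|kl|kl|kl].
by rewrite P11 // e P1cu cvA2_cul.
Qed.
Lemma cancel2' f f' X : klinear f -> klinear f' -> kbilinear X -> cvA f f' = cu 1 ->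
  cvA2 (P2 f) (cvA2 (P2 f') X) = X.
Proof.
move=> hf hf' hX e; rewrite -cvA2A; [|kl|kl|kl].
by rewrite P22 // e P2cu cvA2_cul.
Qed.

Lemma case3 g t' : OmegaA Delta rho g -> OmegaA Delta rho t' -> Z1' (cvA g (fun x => t' (S x))).
Proof.
move=> og ot; have [hgS cg gg' g'g] := omega_cleave og; have [htS ct tt' t't] := omega_cleave ot.
have hg : klinear g by case: og.
have ht' : klinear t' by case: ot.
have cc : coinvF (cvA g (fun x => t' (S x))).
  by apply: coinv_col_acol => //; exact: acol_omegaS.
split; [kl|exact: cc| |].
- exists (cvA t' (fun x => g (S x))); split; [kl|by apply: coinv_col_acol => //; exact: acol_omegaS| |].
  + rewrite cvAAF; [|kl|kl|kl]. by rewrite -(cvAAF (f := fun x => t' (S x))) // t't cvA_culF.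
  + rewrite cvAAF; [|kl|kl|kl]. by rewrite -(cvAAF (f := fun x => g (S x))) // g'g cvA_culF.
- set c := cvA g (fun x => t' (S x)).
  have hc : klinear c by rewrite /c; kl.
  transitivity (cvA2 (P1 g) (cvA2 (P2 c) (P1 (fun x => t' (S x))))).
    rewrite -MmM // (MmOmega og) (MmOmegaS ot).
    norm2; rewrite -(cvA2A (F := P2 g)); [|kl|kl|kl].
    by rewrite P22.
  rewrite (ActOmega og) // -P11 //.
  norm2. congr (cvA2 _ _); congr (cvA2 _ _).
  by rewrite cancel2 //; kl.
Qed.

Lemma Omega_of_Mm c : klinear c -> colinF c -> c 1 = 1 -> Mm c = cvA2 (P1 c) (P2 c) -> OmegaA Delta rho c.
Proof.
move=> hc cc c1 e; split => //; first exact/colinE.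
by move=> h g; rewrite -P12 // -e.
Qed.

Lemma case5 v f : Z1' v -> OmegaA Delta rho f -> OmegaA Delta rho (cvA v f).
Proof.
move=> Zv of'; have Zv' := Zv; case: Zv => hv cv' [v' _] cocv.
have [hfS cf ff' f'f] := omega_cleave of'.
have hf : klinear f by case: of'.
apply: Omega_of_Mm; [kl|by apply: colin_coinv_col| |].
- rewrite /cv sw1; last by kl.
  have -> : v 1 = 1 by apply: Z1_one; apply/Z1P.
  by case: of' => _ _ _ ->; rewrite mulr1.
- rewrite -MmM // cocv (MmOmega of').
  rewrite (cvA2_commB (F := Act v)); [|kl|kl|move=> *; exact: coinv_Act|move=> *; exact: coinv_P1].
  rewrite (ActOmega of') //.
  rewrite -P11 // -P22 //.
  norm2. congr (cvA2 _ _); congr (cvA2 _ _).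
  by rewrite cancel2 //; kl.
Qed.

Definition Act2 (v : H -> A) := fun h l : H => act Delta t u (S l) (v h).

Lemma MmX22 w : klinear w -> Z1' (fun x => w (S x)) -> Mm w = cvA2 (Act2 w) (P2 w).
Proof.
move=> hw [_ _ _ coc]; apply: funext2 => h l.
transitivity (Mm (fun x => w (S x)) (S l) (S h)).
  by rewrite /Mm -S_anti SS.
rewrite coc ActP1; last by kl.
rewrite swS; last by kl.
rewrite /cv2 /Act2 /P2.
rewrite SS (sw_ext (g := fun x y => act Delta t u (S x) (w h) * w y)) => [|x y]; last by rewrite SS.
rewrite -(counitr (F := fun x => SW (fun a b => act Delta t u (S a) (w x) * w b) l) h); last by kl.
apply: sw_ext => x y.
rewrite (swnat (L := fun z => eps y *: z)); [|kl|kl].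
by apply: sw_ext => a b; rewrite scalerAr.
Qed.

Lemma Act2Omega g w : OmegaA Delta rho g -> klinear w -> coinvF w ->
  Act2 w = cvA2 (cvA2 (P2 (fun x => g (S x))) (P1 w)) (P2 g).
Proof.
move=> og hw cw; have [hgS cg _ _] := omega_cleave og.
have hg : klinear g by case: og.
apply: funext2 => h l; rewrite /Act2 (@act_omega g (w h) (S l) og (cw h)).
rewrite swS; last by kl.
rewrite (sw_ext (g := fun x y => g (S x) * w h * g y)) => [|x y]; last by rewrite SS.
have -> : cvA2 (P2 (fun x => g (S x))) (P1 w) = fun h l => g (S l) * w h.
  by apply: funext2 => x y; rewrite P21 //; kl.
rewrite /cv2 /P2.
rewrite -(counitr (F := fun x => SW (fun a b => g (S a) * w x * g b) l) h); last by kl.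
apply: sw_ext => x y.
rewrite (swnat (L := fun z => eps y *: z)); [|kl|kl].
by apply: sw_ext => a b; rewrite scalerAr.
Qed.

Lemma case7 w g : klinear w -> coinvF w -> Z1' (fun x => w (S x)) -> OmegaA Delta rho g ->
  OmegaA Delta rho (cvA g w).
Proof.
move=> hw cw Zw og.
have [hgS cg gg' g'g] := omega_cleave og.
have hg : klinear g by case: og.
apply: Omega_of_Mm; [kl|by apply: colin_col_coinv| |].
- rewrite /cv sw1; last by kl.
  have -> : w 1 = 1.
    have := Z1_one (proj2 (Z1P _) Zw); by rewrite S1.
  by case: og => _ _ _ ->; rewrite mulr1.
- rewrite -MmM // (MmX22 hw Zw) (MmOmega og) (Act2Omega og) // -P11 // -P22 //.
  norm2. congr (cvA2 _ _).
  by rewrite cancel2' //; kl.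
Qed.

Lemma cvS f g h : klinear f -> klinear g ->
  cvA f g (S h) = cvA (fun x => f (S x)) (fun x => g (S x)) h.
Proof. by move=> hf hg; rewrite /cv swS //; kl. Qed.

Lemma Z1'_ext f f' : (forall h, f h = f' h) -> Z1' f -> Z1' f'.
Proof. by move=> e; rewrite (funE e). Qed.
Lemma Omega_ext f f' : (forall h, f h = f' h) -> OmegaA Delta rho f -> OmegaA Delta rho f'.
Proof. by move=> e; rewrite (funE e). Qed.

Lemma klin_ext (f f' : H -> A) : (forall h, f h = f' h) -> klinear f -> klinear f'.
Proof. by move=> e; rewrite (funE e). Qed.

Lemma Z1'_cu : Z1' (cu 1).
Proof.
have hcu : klinear (cu (1 : A)) by rewrite /cu; kl.
have ccu : coinvF (cu 1).
  by move=> h; rewrite /cu (klinZ _ _ hr) r1 (klinZ _ _ j1_lin).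
split => //.
- by exists (cu 1); split => //; rewrite cvA_culF.
- have -> : Act (cu 1) = cuA2.
    apply: funext2 => h l; rewrite /Act /cu (klinZ _ _ (act_linb h)) act_one.
    by rewrite /cu /cu2 !scalerA mulrC.
  rewrite P1cu cvA2_cul; last by kl.
  by apply: funext2 => h l; rewrite /Mm /cu /cu2 emul scalerA.
Qed.

Lemma X22P f : Xmor Delta eps S rho t u O2 O2 f -> [/\ klinear f, coinvF f & Z1' (fun x => f (S x))].
Proof. by case=> [[hf cf] /Z1P Z]. Qed.

Lemma X12P f : Xmor Delta eps S rho t u O1 O2 f -> exists t', OmegaA Delta rho t' /\ f = (fun x => t' (S x)).
Proof. by case=> t' [ot e]; exists t'; split => //; apply: funE. Qed.

Lemma X12I t' : OmegaA Delta rho t' -> Xmor Delta eps S rho t u O1 O2 (fun x => t' (S x)).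
Proof. by move=> ot; exists t'. Qed.

Lemma X12I' c : klinear c -> OmegaA Delta rho (fun x => c (S x)) -> Xmor Delta eps S rho t u O1 O2 c.
Proof. by move=> hc ot; exists (fun x => c (S x)); split => // h; rewrite SS. Qed.

Lemma X22I c : klinear c -> coinvF c -> Z1' (fun x => c (S x)) -> Xmor Delta eps S rho t u O2 O2 c.
Proof. by move=> hc cc Z; split; [split|apply/Z1P]. Qed.

Lemma Cmor22 f : klinear f -> coinvF f -> Cmor Delta S rho O2 O2 f.
Proof.
move=> hf cf; split => // h; rewrite (cf h).
have htp : kbilinear (tp_mul AH) by exact: tpbil.
transitivity (SW (fun x y => SW (fun a b => tp_mul AH (f a) (S b * y)) x) h); last first.
  by apply: sw_ext => x y; rewrite swap //; kl.
rewrite (coassE (f := fun a b y => tp_mul AH (f a) (S b * y))); last by kl.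
transitivity (SW (fun x y => eps y *: tp_mul AH (f x) 1) h).
  by rewrite (counitr (F := fun x => tp_mul AH (f x) 1)) //; kl.
apply: sw_ext => x y.
rewrite -(swnat (L := tp_mul AH (f x)) (f := fun a b => S a * b)); [|kl|kl].
by rewrite (proj1 (antip y)) (klinZ _ _ (proj1 htp (f x))).
Qed.

Lemma convE f g : conv Delta f g = cvA f g.
Proof. by []. Qed.

Lemma main_sub : is_subcategory Delta eps S rho (Xmor Delta eps S rho t u).
Proof.
split.
- move=> [] [] f.
  + by case=> [[hf cf] _].
  + move/X12P=> [t' [ot ->]]; have [htS _ _ _] := omega_cleave ot.
    split => //; apply/acolE; exact: acol_omegaS.
  + by case=> hf cf _ _; split.
  + by move/X22P=> [hf cf _]; apply: Cmor22.
- case.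
  + by apply/Z1P; exact: Z1'_cu.
  + apply: X22I; [rewrite /Cid /cu; kl| |].
    * by move=> h; rewrite /Cid /cu (klinZ _ _ hr) r1 (klinZ _ _ j1_lin).
    * by apply: (Z1'_ext _ Z1'_cu) => h; rewrite /cu /Cid /cunit eps_S.
- move=> [] [] [] f g; rewrite /Ccomp convE.
  + (* 1 1 1 *) move=> /Z1P Zf /Z1P Zg; apply/Z1P; exact: case1.
  + (* 1 1 2 *) move=> /Z1P Zf /X12P [t' [ot ->]].
    have [hf cf _ _] := Zf; have ht' : klinear t' by case: ot.
    have [htS _ _ _] := omega_cleave ot.
    apply: X12I'; first by kl.
    apply: (Omega_ext (f := cvA t' (fun x => f (S x)))).
      by move=> h; rewrite cvS //; apply: cv_extl => x; rewrite SS.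
    apply: case7; [kl|by move=> h; exact: cf| |exact: ot].
    apply: (Z1'_ext (f := f)) => [h|]; [by rewrite SS|exact: Zf].
  + (* 1 2 1 *) by move=> /X12P [t' [ot ->]] og; apply/Z1P; exact: case3.
  + (* 1 2 2 *) move=> /X12P [t' [ot ->]] /X22P [hg cg Zg].
    have ht' : klinear t' by case: ot.
    apply: X12I'; first by kl.
    apply: (Omega_ext (f := cvA (fun x => g (S x)) t')).
      by move=> h; rewrite cvS //; [apply: cv_extr => x; rewrite SS|kl].
    exact: case5.
  + (* 2 1 1 *) by move=> of' /Z1P Zg; exact: case5.
  + (* 2 1 2 *) move=> of' /X12P [t' [ot ->]].
    have hf : klinear f by case: of'.
    have ht' : klinear t' by case: ot.
    have [hfS cf _ _] := omega_cleave of'.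
    apply: X22I; [kl|apply: coinv_acol_col => //; [kl|exact: acol_omegaS]|].
    apply: (Z1'_ext (f := cvA t' (fun x => f (S x)))).
      by move=> h; rewrite cvS //; [apply: cv_extl => x; rewrite SS|kl].
    exact: case3.
  + (* 2 2 1 *) by move=> /X22P [hf cf Zf] og; exact: case7.
  + (* 2 2 2 *) move=> /X22P [hf cf Zf] /X22P [hg cg Zg].
    apply: X22I; [kl|exact: coinv_cv|].
    apply: (Z1'_ext (f := cvA (fun x => g (S x)) (fun x => f (S x)))).
      by move=> h; rewrite cvS.
    exact: case1.
Qed.
End Hopf.
Theorem theorem5p6 (k : comPzRingType) (H A : algType k)
    (HH : tensor_product H H) (AH : tensor_product A H)
    (Delta : H -> HH) (eps : H -> k) (S : H -> H) (rho : A -> AH)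
    (t u : H -> A) :
  is_cocomm_hopf Delta eps S ->
  is_comodule_algebra Delta eps rho ->
  (* B = A^{co H} is commutative *)
  (forall b1 b2, coinv rho b1 -> coinv rho b2 -> b1 * b2 = b2 * b1) ->
  (* A is cleft: t is convolution invertible, H-colinear, with inverse u *)
  klinear t -> colinear Delta rho t -> klinear u ->
  (forall h, conv Delta t u h = cunit A eps h) ->
  (forall h, conv Delta u t h = cunit A eps h) ->
  is_subcategory Delta eps S rho (Xmor Delta eps S rho t u).
Proof.
move=> [hD [he [hS [coass [counit [Dmul [D1 [emul [e1 [antip cocom]]]]]]]]]].
move=> [hr _ _ rmul r1] Bcomm ht hct hu tu ut.
exact: (main_sub hD he hS coass counit Dmul D1 emul e1 antip cocom hr rmul r1 ht hu hct tu ut Bcomm).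
Qed.
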